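(* Let $\Lambda$ be a row-finite $k$-graph with no sinks and no sources such that $\Lambda^0$ is finite. If the system $(\Lambda,\mathbb{Z}^k,d)$ is cofinal, then $\Lambda$ is primitive.
   Context: A $k$-graph is a countable category $\Lambda$ with a functor $d:\Lambda\to\mathbb{N}^k$ with unique factorisation. $\Lambda^n=d^{-1}(n)$, $\Lambda^0$ = vertices, $uXv=\{\lambda\in X:r(\lambda)=u,s(\lambda)=v\}$. Row-finite: $v\Lambda^n$ finite; no sources: $v\Lambda^n\ne\emptyset$ for $n\neq0$; no sinks: $\Lambda^nv\ne\emptyset$ for $n\ne0$. For $m,n\in\mathbb{N}^k$, $m>n$ means $m_i>n_i$ for all $i$. $\Lambda$ is primitive if there is $N\in\mathbb{N}^k$, $N>0$, with $u\Lambda^Nv\ne\emptyset$ for all $u,v\in\Lambda^0$. Regarding $d$ as a functor into the group $\mathbb{Z}^k$, the system $(\Lambda,\mathbb{Z}^k,d)$ is cofinal if for all $v,w\in\Lambda^0$ and $a,b\in\mathbb{Z}^k$ there is $N\in\mathbb{N}^k$ such that for every $\alpha\in w\Lambda^N$ there is $\beta\in v\Lambda s(\alpha)$ with $a+d(\beta)=b+d(\alpha)$. *)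

(* Defs.v *)
From mathcomp Require Import all_boot all_order all_algebra.
Set Implicit Arguments. Unset Strict Implicit. Unset Printing Implicit Defensive.

Definition degk (k : nat) := {ffun 'I_k -> nat}.
Definition deg0 (k : nat) : degk k := [ffun => 0%N].
Definition degadd (k : nat) (m n : degk k) : degk k := [ffun i => (m i + n i)%N].

(* A k-graph: a countable category (objects V, morphisms M) with a degree
   functor d : M -> N^k having the unique factorisation property.
   Conventions: lam : s lam -> r lam (range r, source s); comp lam mu is the
   composite "lam mu", meaningful when s lam = r mu. *)
Record kgraph (k : nat) := KGraph {
  kV : countType;
  kM : countType;
  kr : kM -> kV;
  ks : kM -> kV;
  kid : kV -> kM;
  kcomp : kM -> kM -> kM;
  kd : kM -> degk k;
  kid_r : forall v, kr (kid v) = v;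
  kid_s : forall v, ks (kid v) = v;
  kcomp_r : forall l m, ks l = kr m -> kr (kcomp l m) = kr l;
  kcomp_s : forall l m, ks l = kr m -> ks (kcomp l m) = ks m;
  kcomp_idl : forall l, kcomp (kid (kr l)) l = l;
  kcomp_idr : forall l, kcomp l (kid (ks l)) = l;
  kcompA : forall l m n, ks l = kr m -> ks m = kr n ->
     kcomp l (kcomp m n) = kcomp (kcomp l m) n;
  kd_id : forall v, kd (kid v) = deg0 k;
  kd_comp : forall l m, ks l = kr m -> kd (kcomp l m) = degadd (kd l) (kd m);
  kfactor : forall l (m n : degk k), kd l = degadd m n ->
     exists! p : kM * kM, [/\ ks p.1 = kr p.2, kd p.1 = m, kd p.2 = n
                            & kcomp p.1 p.2 = l]
}.

Section Props.
Variables (k : nat) (G : kgraph k).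

Definition row_finite : Prop :=
  forall (v : kV G) (n : degk k), exists s : seq (kM G),
    forall l, kr l = v -> kd l = n -> l \in s.

Definition no_sources : Prop :=
  forall (v : kV G) (n : degk k), n <> deg0 k -> exists l, kr l = v /\ kd l = n.

Definition no_sinks : Prop :=
  forall (v : kV G) (n : degk k), n <> deg0 k -> exists l, ks l = v /\ kd l = n.

Definition vertices_finite : Prop := exists s : seq (kV G), forall v, v \in s.

Definition primitive : Prop :=
  exists N : degk k, (forall i, (0 < N i)%N) /\
    forall u v : kV G, exists l, [/\ kr l = u, ks l = v & kd l = N].

Definition cofinal : Prop :=
  forall (v w : kV G) (a b : 'I_k -> int), exists N : degk k,
    forall alpha, kr alpha = w -> kd alpha = N ->
      exists beta, [/\ kr beta = v, ks beta = ks alpha &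
        forall i, (a i + (kd beta i)%:Z = b i + (kd alpha i)%:Z)%R].
End Props.

(* Main.v *)
Require Import Defs.
From mathcomp Require Import all_boot all_order all_algebra.
Set Implicit Arguments. Unset Strict Implicit. Unset Printing Implicit Defensive.
Import GRing.Theory Num.Theory.

Section Aux.
Variables (k : nat) (G : kgraph k).

Definition PP (v w : kV G) (N : degk k) : Prop :=
  forall alpha, kr alpha = w -> kd alpha = N ->
    exists beta, [/\ kr beta = v, ks beta = ks alpha & kd beta = kd alpha].

Lemma PP_mono v w (N N' : degk k) : PP v w N -> (forall i, N i <= N' i) -> PP v w N'.
Proof.
move=> HP Hle alpha Hr Hd.
have Hdec : kd alpha = degadd N [ffun i => N' i - N i].
  by rewrite Hd; apply/ffunP => i; rewrite !ffunE subnKC.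
have [[a1 a2] [[/= Hs12 Hd1 Hd2 Hc] _]] := kfactor Hdec.
have Hr1 : kr a1 = w by rewrite -Hr -Hc kcomp_r.
have [b [Hbr Hbs Hbd]] := HP a1 Hr1 Hd1.
have Hsb : ks b = kr a2 by rewrite Hbs.
exists (kcomp b a2); split.
- by rewrite kcomp_r.
- by rewrite kcomp_s // -Hc kcomp_s.
- by rewrite kd_comp // -Hc kd_comp // Hbd.
Qed.

Lemma exists_common (T : eqType) (Q : T -> degk k -> Prop) (L : seq T) :
  (forall t (N N' : degk k), Q t N -> (forall i, N i <= N' i) -> Q t N') ->
  (forall t, exists N, Q t N) ->
  exists N : degk k, (forall i, 0 < N i) /\ forall t, t \in L -> Q t N.
Proof.
move=> Hm Hex; elim: L => [|t L [N [HN HL]]].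
  by exists [ffun => 1]; split => // i; rewrite ffunE.
have [N0 H0] := Hex t.
exists [ffun i => maxn (N i) (N0 i)]; split.
  by move=> i; rewrite ffunE (leq_trans (HN i)) // leq_maxl.
move=> t'; rewrite inE => /orP [/eqP -> | Ht'].
  by apply: Hm H0 _ => i; rewrite ffunE leq_maxr.
by apply: Hm (HL _ Ht') _ => i; rewrite ffunE leq_maxl.
Qed.

End Aux.

Theorem theorem7p1 (k : nat) (G : kgraph k) :
  row_finite G -> no_sinks G -> no_sources G -> vertices_finite G ->
  cofinal G -> primitive G.
Proof.
move=> _ Hsink _ [s Hs] Hcof.
have Hex : forall p : kV G * kV G, exists N, PP p.1 p.2 N.
  move=> [v w]; have [N HN] := Hcof v w (fun _ => 0%R) (fun _ => 0%R).
  exists N => alpha Hr Hd; have [b [Hbr Hbs Hbe]] := HN alpha Hr Hd.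
  exists b; split => //; apply/ffunP => i.
  by have := Hbe i; rewrite !add0r => /eqP; rewrite eqz_nat => /eqP.
have [N [HN HL]] := exists_common [seq (x, y) | x <- s, y <- s]
  (fun t N N' H Hle => @PP_mono k G t.1 t.2 N N' H Hle) Hex.
exists N; split => // u x.
have [alpha [Has Had]] : exists alpha, ks alpha = x /\ kd alpha = N.
  case: (posnP k) => [Hk0|Hkp].
    exists (kid x); split; first exact: kid_s.
    by apply/ffunP => i; exfalso; have := ltn_ord i; rewrite {2}Hk0.
  apply: Hsink => HN0.
  by have := HN (Ordinal Hkp); rewrite HN0 ffunE.
have HP := HL (u, kr alpha) (allpairs_f _ (Hs u) (Hs (kr alpha))).
have [b [Hbr Hbs Hbd]] := HP alpha erefl Had.
by exists b; split; rewrite ?Hbs ?Hbd.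
Qed.
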